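(* Let $M$ be a known finite-horizon reward-free MDP, $\Pi\subseteq\Pi_{\mathrm{RNS}}$, $\varepsilon\in[0,1]$, $h\in[H]$, and $\mu\in\Delta(\mathcal{X}\times\mathcal{A})$ with $C_\infty\equiv C^M_{\infty;h}(\mu)$. Consider the following procedure: set $T=\varepsilon^{-1}$; for $t=1,\dots,T$, compute $\pi^{(t)}\in\Pi$ such that $$\mathbb{E}^{M,\pi^{(t)}}\Big[\frac{\mu(x_h,a_h)}{\sum_{i<t}d^{M,\pi^{(i)}}_h(x_h,a_h)+C_\infty\mu(x_h,a_h)}\Big]\ge\sup_{\pi\in\Pi}\mathbb{E}^{M,\pi}\Big[\frac{\mu(x_h,a_h)}{\sum_{i<t}d^{M,\pi^{(i)}}_h(x_h,a_h)+C_\infty\mu(x_h,a_h)}\Big]-\varepsilon_{\mathrm{opt}};$$ return $p=\mathrm{Unif}(\pi^{(1)},\dots,\pi^{(T)})$. Whenever $\varepsilon_{\mathrm{opt}}\le\varepsilon\log(2\varepsilon^{-1})$, the output $p\in\Delta(\Pi)$ satisfies $|\mathrm{supp}(p)|\le\varepsilon^{-1}$ and $$\Psi^M_{\mu;h,\varepsilon}(p)\le 3\log(2\varepsilon^{-1}),$$ and consequently $\Psi^M_{h,\varepsilon}(p)\le 6C_\infty\log(2\varepsilon^{-1})$.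
   Context: Episodic reward-free MDP $M$ (countable states $\mathcal{X}$, actions $\mathcal{A}$, horizon $H$); $\Pi_{\mathrm{RNS}}$ randomized non-stationary policies; $d^{M,\pi}_h(x,a)$ is the layer-$h$ state-action occupancy of $\pi$ in $M$, $d^{M,p}_h=\mathbb{E}_{\pi\sim p}d^{M,\pi}_h$. Definitions: $\Psi^M_{h,\varepsilon}(p)=\sup_{\pi\in\Pi}\mathbb{E}^{M,\pi}\big[\frac{d^{M,\pi}_h(x_h,a_h)}{d^{M,p}_h(x_h,a_h)+\varepsilon d^{M,\pi}_h(x_h,a_h)}\big]$; $C^M_{\infty;h}(\mu)=\sup_{\pi\in\Pi}\sup_{(x,a)}\frac{d^{M,\pi}_h(x,a)}{\mu(x,a)}$; $\Psi^M_{\mu;h,\varepsilon}(p)=\sup_{\pi\in\Pi}\mathbb{E}^{M,\pi}\big[\frac{\mu(x_h,a_h)}{d^{M,p}_h(x_h,a_h)+\varepsilon C_\infty\mu(x_h,a_h)}\big]$. *)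

(* Defs.v *)
From HB Require Import structures.
From mathcomp Require Import all_boot all_order all_algebra.
From mathcomp Require Import all_classical all_reals all_analysis.
Set Implicit Arguments. Unset Strict Implicit. Unset Printing Implicit Defensive.
Import Order.TTheory GRing.Theory Num.Theory.
Local Open Scope classical_set_scope.
Local Open Scope ring_scope.
Local Open Scope ereal_scope.

(* Episodic reward-free MDP over countable state space X and action space A.
   Layers are numbered 1, 2, ..., H. *)
Record mdp (R : realType) (X A : countType) := MDP {
  horizon : nat;
  init : X -> R;
  trans : nat -> X -> A -> X -> R   (* trans h x a x' = P_h(x' | x, a) *)
}.

Definition is_distr (R : realType) (T : countType) (f : T -> R) : Prop :=
  (forall t, (0 <= f t)%R) /\ \esum_(t in [set: T]) (f t)%:E = 1.

Definition is_mdp (R : realType) (X A : countType) (M : mdp R X A) : Prop :=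
  is_distr (init M) /\ forall h x a, is_distr (trans M h x a).

(* randomized non-stationary (Markov) policy: pi h x is a distribution on A *)
Definition policy (R : realType) (X A : countType) := nat -> X -> A -> R.

Definition Pi_RNS (R : realType) (X A : countType) : set (policy R X A) :=
  [set pi | forall h x, is_distr (pi h x)].

(* occupancy at layer n.+1, in extended reals *)
Fixpoint occ_e (R : realType) (X A : countType) (M : mdp R X A)
    (pi : policy R X A) (n : nat) : X -> A -> \bar R :=
  match n with
  | 0 => fun x a => (init M x * pi 1%N x a)%:E
  | n'.+1 => fun x' a' =>
      (\esum_(z in [set: X * A]) occ_e M pi n' z.1 z.2
                                  * (trans M n z.1 z.2 x')%:E)
      * (pi n.+1 x' a')%:E
  end.

(* d^{M,pi}_h (x,a), layer h >= 1 *)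
Definition occ (R : realType) (X A : countType) (M : mdp R X A)
    (pi : policy R X A) (h : nat) (x : X) (a : A) : R :=
  fine (occ_e M pi h.-1 x a).

Definition eratio (R : realType) (b c : R) : \bar R :=
  if c == 0%R then (if b == 0%R then 0 else +oo) else (b / c)%:E.

Definition Eocc (R : realType) (X A : countType) (M : mdp R X A)
    (pi : policy R X A) (h : nat) (g : X -> A -> \bar R) : \bar R :=
  \esum_(z in [set: X * A]) (occ M pi h z.1 z.2)%:E * g z.1 z.2.

(* A finitely supported distribution p on policies is represented through
   its layer-h occupancy d^{M,p}_h = E_{pi ~ p} d^{M,pi}_h : X -> A -> R. *)

Definition Psi (R : realType) (X A : countType) (M : mdp R X A)
    (Pi : set (policy R X A)) (h : nat) (eps : R) (dp : X -> A -> R) : \bar R :=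
  ereal_sup [set Eocc M pi h (fun x a =>
                eratio (occ M pi h x a) (dp x a + eps * occ M pi h x a))
            | pi in Pi].

Definition Cinf (R : realType) (X A : countType) (M : mdp R X A)
    (Pi : set (policy R X A)) (h : nat) (mu : X * A -> R) : \bar R :=
  ereal_sup [set eratio (occ M pi h z.1 z.2) (mu z)
            | pi in Pi & z in [set: X * A]].

(* Psi^M_{mu;h,eps}(p), with C_infty = C^M_{infty;h}(mu) (assumed finite) *)
Definition Psi_mu (R : realType) (X A : countType) (M : mdp R X A)
    (Pi : set (policy R X A)) (h : nat) (eps : R) (mu : X * A -> R)
    (dp : X -> A -> R) : \bar R :=
  let C := fine (Cinf M Pi h mu) in
  ereal_sup [set Eocc M pi h (fun x a =>
                eratio (mu (x, a)) (dp x a + eps * C * mu (x, a)))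
            | pi in Pi].

(* The output p = Unif(pol 0, ..., pol (T-1)) *)
Definition unif_pmf (R : realType) (X A : countType) (T : nat)
    (pol : nat -> policy R X A) (pi : policy R X A) : R :=
  ((\sum_(t < T) (if `[< pol t = pi >] then 1 else 0)) / T%:R)%R.

Definition supp (R : realType) (X A : countType) (p : policy R X A -> R)
  : set (policy R X A) := [set pi | p pi != 0%R].

Definition unif_occ (R : realType) (X A : countType) (M : mdp R X A)
    (T : nat) (pol : nat -> policy R X A) (h : nat) (x : X) (a : A) : R :=
  ((\sum_(t < T) occ M (pol t) h x a) / T%:R)%R.

(* Main.v *)
Require Import Defs.
From HB Require Import structures.
From mathcomp Require Import all_boot all_order all_algebra.
From mathcomp Require Import all_classical all_reals all_analysis.
From mathcomp Require Import ring lra.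
Import Order.TTheory GRing.Theory Num.Theory.
Local Open Scope classical_set_scope.
Local Open Scope ring_scope.
Lemma esumZ_le (R : realType) (T : choiceType) (I : set T) (k : R) (a : T -> \bar R) :
  (0 <= k)%R -> (forall i, I i -> (0 <= a i)%E) ->
  (\esum_(i in I) (k%:E * a i) <= k%:E * \esum_(i in I) a i)%E.
Proof.
move=> k0 a0; apply: ge_ereal_sup => _ [X [finX XI] <-].
rewrite fsbig_finite//= big_seq -ge0_sume_distrr; last first.
  by move=> i; rewrite in_fset_set// inE => /XI/a0.
rewrite -big_seq.
apply: lee_wpmul2l; first by rewrite lee_fin.
by apply: esum_ge; exists X => //; rewrite fsbig_finite.
Qed.

Lemma ln_step (R : realType) (a b : R) : 0 < a -> a <= b -> b <= 2 * a ->
  (b - a) / a <= 2 * (ln b - ln a).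
Proof.
move=> a0 ab b2a.
have b0 : 0 < b by apply: lt_le_trans ab.
have h1 : ln (1 + (a / b - 1)) <= a / b - 1.
  apply: le_ln1Dx. have : 0 < a / b by apply: divr_gt0. lra.
rewrite addrC subrK ln_div ?posrE // in h1.
have e1 : (b - a) / a = b / a - 1 by field; rewrite gt_eqF.
have e2 : a / b = (b / a)^-1 by rewrite invf_div.
rewrite e2 in h1; rewrite e1.
have x1 : 1 <= b / a by rewrite ler_pdivlMr // mul1r.
have x2 : b / a <= 2 by rewrite ler_pdivrMr.
move: x1 x2 h1; set x := b / a => x1 x2 h1.
have xi : x * x^-1 = 1 by rewrite mulfV // gt_eqF; lra.
have xi0 : 0 < x^-1 by rewrite invr_gt0; lra.
have : (x - 1) * (x - 2) * x^-1 <= 0 by apply: mulr_le0_ge0; [nra|lra].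
nra.
Qed.

Lemma telesc (R : realType) (c : R) (d : nat -> R) (T : nat) : 0 < c ->
  (forall t, (t < T)%N -> 0 <= d t <= c) ->
  \sum_(t < T) d t / (\sum_(i < t) d i + c) <= 2 * (ln (\sum_(i < T) d i + c) - ln c).
Proof.
move=> c0; elim: T => [|T IH] dc.
  by rewrite !big_ord0 add0r subrr mulr0.
have dc' : forall t, (t < T)%N -> 0 <= d t <= c by move=> t tT; apply: dc; apply: ltnW.
rewrite big_ord_recr /= [in X in _ <= 2 * (ln (X + _) - _)]big_ord_recr /=.
set D := \sum_(i < T) d i.
have D0 : 0 <= D by apply: sumr_ge0 => i _; case/andP: (dc' i (ltn_ord i)).
have := @ln_step R (D + c) (D + d T + c).
case/andP: (dc T (ltnSn T)) => d0 dT.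
have IH' := IH dc'.
have -> : D + d T + c - (D + c) = d T by lra.
move=> /(_ ltac:(lra) ltac:(lra) ltac:(lra)) H.
lra.
Qed.

Lemma telesc2 (R : realType) (c : R) (d : nat -> R) (T : nat) : 0 < c -> (0 < T)%N ->
  (forall t, (t < T)%N -> 0 <= d t <= c) ->
  \sum_(t < T) d t / (\sum_(i < t) d i + c) <= 2 * ln (2 * T%:R).
Proof.
move=> c0 T0 dc.
apply: le_trans (@telesc R c d T c0 dc) _.
have DT : \sum_(i < T) d i <= c * T%:R.
  apply: (@le_trans _ _ (\sum_(i < T) c)).
    by apply: ler_sum => i _; case/andP: (dc i (ltn_ord i)).
  by rewrite sumr_const card_ord mulr_natr.
have D0 : 0 <= \sum_(i < T) d i.
  by apply: sumr_ge0 => i _; case/andP: (dc i (ltn_ord i)).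
have T1 : 1 <= T%:R :> R by rewrite ler1n.
have : ln (\sum_(i < T) d i + c) <= ln (c * (2 * T%:R)).
  rewrite ler_ln ?posrE; [|lra|]; last by apply: mulr_gt0 => //; lra.
  nra.
rewrite lnM ?posrE //; last by lra.
lra.
Qed.

Lemma occ_e_ge0 (R : realType) (X A : countType) (M : mdp R X A) pi n x a :
  is_mdp M -> Pi_RNS pi -> (0 <= occ_e M pi n x a)%E.
Proof.
move=> [[i0 _] tr] Hpi; elim: n x a => [|n IH] x a /=.
  by rewrite lee_fin mulr_ge0 //; case: (Hpi 1%N x) => ->.
apply: mule_ge0; last by rewrite lee_fin; case: (Hpi n.+2 x) => ->.
apply: esum_ge0 => z _; apply: mule_ge0 => //.
by rewrite lee_fin; case: (tr n.+1 z.1 z.2) => ->.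
Qed.

Lemma occ_ge0 (R : realType) (X A : countType) (M : mdp R X A) pi h x a :
  is_mdp M -> Pi_RNS pi -> 0 <= occ M pi h x a.
Proof. by move=> HM Hpi; rewrite /occ fine_ge0 // occ_e_ge0. Qed.

Lemma eratio0 (R : realType) (c : R) : eratio 0 c = 0%E.
Proof. by rewrite /eratio; case: ifP; rewrite ?eqxx // mul0r. Qed.

Lemma eratio_pos (R : realType) (b c : R) : 0 < c -> eratio b c = (b / c)%:E.
Proof. by move=> c0; rewrite /eratio gt_eqF. Qed.

Lemma eratio_ge0 (R : realType) (b c : R) : 0 <= b -> 0 <= c -> (0 <= eratio b c)%E.
Proof.
move=> b0 c0; rewrite /eratio; case: ifP => _; last by rewrite lee_fin divr_ge0.
by case: ifP.
Qed.

Theorem theorem4p2 (R : realType) (X A : countType) (M : mdp R X A)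
    (Pi : set (policy R X A)) (eps : R) (T : nat) (h : nat)
    (mu : X * A -> R) (eps_opt : R) (pol : nat -> policy R X A) :
  is_mdp M ->
  Pi `<=` @Pi_RNS R X A ->
  (0 < T)%N -> eps^-1 = T%:R ->
  (1 <= h <= horizon M)%N ->
  is_distr mu ->
  Cinf M Pi h mu \is a fin_num ->
  let C := fine (Cinf M Pi h mu) in
  (forall t, (t < T)%N -> Pi (pol t)) ->
  (forall t, (t < T)%N ->
     let g := fun x a => eratio (mu (x, a))
                (\sum_(i < t) occ M (pol i) h x a + C * mu (x, a)) in
     (Eocc M (pol t) h g >= ereal_sup [set Eocc M pi h g | pi in Pi]
                              - eps_opt%:E)%E) ->
  eps_opt <= eps * ln (2 / eps) ->
  let p := unif_pmf T pol in
  let dp := unif_occ M T pol h in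
  supp p `<=` Pi /\
  (supp p #<= `I_T)%card /\
  (Psi_mu M Pi h eps mu dp <= (3 * ln (2 / eps))%:E)%E /\
  (Psi M Pi h eps dp <= (6 * C * ln (2 / eps))%:E)%E.
Proof.
move=> HM HPi T0 epsT hH [mu0 mu1] Cfin C pol_in hopt heps p dp.
have epsE : eps = T%:R^-1 by rewrite -epsT invrK.
have Tpos : (0 < T%:R :> R) by rewrite ltr0n.
have eps0 : 0 < eps by rewrite epsE invr_gt0.
have LE : 2 / eps = 2 * T%:R by rewrite epsE invrK.
set L := ln (2 / eps).
have L0 : 0 < L.
  rewrite /L LE; apply: ln_gt0; have : 1 <= T%:R :> R by rewrite ler1n.
  lra.
have CE : Cinf M Pi h mu = C%:E by rewrite fineK.
have occC : forall pi, Pi pi -> forall x a, occ M pi h x a <= C * mu (x, a).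
  move=> pi Hpi x a.
  have : (eratio (occ M pi h x a) (mu (x,a)) <= Cinf M Pi h mu)%E.
    by apply: ereal_sup_ubound; exists pi => //; exists (x, a).
  rewrite CE /eratio; case: ifPn => [/eqP ->|mun0].
    by case: ifPn => [/eqP -> _|_]; [rewrite mulr0|rewrite leye_eq].
  have mup : 0 < mu (x, a) by rewrite lt0r mun0 mu0.
  by rewrite lee_fin ler_pdivrMr // mulrC.
have occ0 : forall pi, Pi pi -> forall x a, 0 <= occ M pi h x a.
  by move=> pi Hpi x a; apply: occ_ge0 => //; apply: HPi.
have [[x0 a0] muz0] : exists z, 0 < mu z.
  apply/not_existsP => H; move: mu1; rewrite esum1 => [|z _].
    by move/eqP; rewrite eq_sym onee_eq0.
  have := mu0 z; rewrite le_eqVlt => /orP[/eqP <- //|/[dup] /H].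
  by [].
have C0 : 0 <= C.
  have := occC _ (pol_in 0%N T0) x0 a0; have := occ0 _ (pol_in 0%N T0) x0 a0.
  move=> o0 oC; have : 0 <= C * mu (x0, a0) by apply: le_trans oC.
  by rewrite pmulr_lge0.
have suppP : forall pi, supp p pi -> exists t : 'I_T, pol t = pi.
  move=> pi; rewrite /supp /p /unif_pmf /= => Hp.
  case: (pickP (fun t : 'I_T => `[< pol t = pi >])) => [t /asboolP <-|H].
    by exists t.
  by move: Hp; rewrite big1 ?mul0r ?eqxx // => t _; rewrite H.
split.
  by move=> pi /suppP [t <-]; apply: pol_in.
split.
  apply: (@card_le_trans _ _ _ (pol @` `I_T)); last exact: card_image_le.
  apply: subset_card_le => pi /suppP [t <-].
  by exists (nat_of_ord t) => //; rewrite /= ltn_ord.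
have dp0 : forall x a, 0 <= dp x a.
  move=> x a; rewrite /dp /unif_occ divr_ge0 //.
  by apply: sumr_ge0 => t _; apply: occ0; apply: pol_in.
move: C0; rewrite le_eqVlt => /orP[/eqP C00|Cpos].
  have o0 : forall pi, Pi pi -> forall x a, occ M pi h x a = 0.
    move=> pi Hpi x a; apply/eqP; rewrite eq_le occ0 // andbT.
    by have := occC pi Hpi x a; rewrite -C00 mul0r.
  split.
    rewrite /Psi_mu /=; apply: ge_ereal_sup => _ [pi Hpi <-].
    rewrite /Eocc esum1 ?lee_fin; first by lra.
    by move=> [x a] _ /=; rewrite o0 // mul0e.
  rewrite /Psi /=; apply: ge_ereal_sup => _ [pi Hpi <-].
  rewrite /Eocc esum1 ?lee_fin; first by rewrite -C00 mulr0 mul0r.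
  by move=> [x a] _ /=; rewrite o0 // mul0e.
pose G (t : nat) := fun x a => eratio (mu (x, a))
                (\sum_(i < t) occ M (pol i) h x a + C * mu (x, a)).
have Dt0 : forall (t : 'I_T) x a, 0 <= \sum_(i < t) occ M (pol i) h x a.
  move=> t x a; apply: sumr_ge0 => i _; apply: occ0; apply: pol_in.
  exact: ltn_trans (ltn_ord i) (ltn_ord t).
have G0 : forall (t : 'I_T) x a, (0 <= G t x a)%E.
  move=> t x a; apply: eratio_ge0 => //; apply: addr_ge0 => //.
  by apply: mulr_ge0 => //; apply: ltW.
have step1 : forall pi, Pi pi ->
   (Eocc M pi h (fun x a => eratio (mu (x, a)) (dp x a + eps * C * mu (x, a)))
     <= \sum_(t < T) Eocc M pi h (G t))%E.
  move=> pi Hpi; rewrite /Eocc -esum_sum; last first.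
    by move=> z t _ _; apply: mule_ge0; [rewrite lee_fin occ0|apply: G0].
  apply: le_esum => -[x a] _ /=.
  have o0 := occ0 pi Hpi x a.
  case: (eqVneq (mu (x, a)) 0) => [mu00|mun0].
    rewrite mu00 eratio0 mule0 sume_ge0 // => t _.
    by rewrite /G mu00 eratio0 mule0.
  have mup : 0 < mu (x, a) by rewrite lt0r mun0 mu0.
  have Cm : 0 < C * mu (x, a) by apply: mulr_gt0.
  have eCm : 0 < eps * C * mu (x, a) by rewrite -mulrA mulr_gt0.
  rewrite eratio_pos; last by have := dp0 x a; lra.
  rewrite /G (eq_bigr (fun t : 'I_T => (occ M pi h x a * (mu (x, a) /
      (\sum_(i < t) occ M (pol i) h x a + C * mu (x, a))))%:E)); last first.
    by move=> t _; rewrite eratio_pos ?EFinM //; have := Dt0 t x a; lra.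
  rewrite -EFinM sumEFin lee_fin -mulr_sumr; apply: ler_wpM2l => //.
  set DT := \sum_(i < T) occ M (pol i) h x a.
  have DT0 : 0 <= DT by apply: sumr_ge0 => i _; apply: occ0; apply: pol_in.
  have le1 : forall t : 'I_T, mu (x, a) / (DT + C * mu (x, a)) <=
      mu (x, a) / (\sum_(i < t) occ M (pol i) h x a + C * mu (x, a)).
    move=> t; apply: ler_wpM2l; first exact: ltW.
    rewrite lef_pV2 ?posrE; [|lra|by have := Dt0 t x a; lra].
    rewrite lerD2r /DT (big_ord_widen _ (fun i => occ M (pol i) h x a) (ltnW (ltn_ord t))).
    rewrite [X in _ <= X](bigID (fun i : 'I_T => (i < t)%N)) /= lerDl.
    by apply: sumr_ge0 => i _; apply: occ0; apply: pol_in.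
  apply: le_trans (ler_sum _ (fun t _ => le1 t)).
  rewrite sumr_const card_ord -mulr_natr.
  have -> : dp x a = DT / T%:R by [].
  rewrite epsE le_eqVlt; apply/orP; left; apply/eqP; field.
  by apply/andP; split; rewrite gt_eqF //; lra.
have step4 : (\sum_(t < T) Eocc M (pol t) h (G t) <= (2 * L)%:E)%E.
  rewrite /Eocc -esum_sum; last first.
    move=> z t _ _; apply: mule_ge0; last exact: G0.
    by rewrite lee_fin; apply: occ0; apply: pol_in.
  apply: (@le_trans _ _ (\esum_(z in [set: X * A]) ((2 * L)%:E * (mu z)%:E))%E).
    apply: le_esum => -[x a] _ /=.
    case: (eqVneq (mu (x, a)) 0) => [mu00|mun0].
      rewrite mu00 mule0 big1 // => t _.
      by rewrite /G mu00 eratio0 mule0.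
    have mup : 0 < mu (x, a) by rewrite lt0r mun0 mu0.
    have Cm : 0 < C * mu (x, a) by apply: mulr_gt0.
    rewrite /G (eq_bigr (fun t : 'I_T => (mu (x, a) * (occ M (pol t) h x a /
        (\sum_(i < t) occ M (pol i) h x a + C * mu (x, a))))%:E)); last first.
      move=> t _; rewrite eratio_pos -?EFinM; last by have := Dt0 t x a; lra.
      by rewrite mulrCA.
    rewrite sumEFin -EFinM lee_fin -mulr_sumr [X in _ <= X]mulrC.
    apply: ler_wpM2l; first exact: ltW.
    rewrite /L LE.
    apply: (@telesc2 R (C * mu (x, a)) (fun t => occ M (pol t) h x a) T Cm T0).
    move=> t tT; rewrite occ0 ?occC //=; exact: pol_in.
  apply: le_trans (@esumZ_le R _ [set: X * A] (2 * L) (fun z => (mu z)%:E) _ _) _.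
  - by apply: ltW; rewrite mulr_gt0.
  - by move=> z _; rewrite lee_fin.
  by rewrite mu1 mule1.
have optT : eps_opt *+ T <= L.
  rewrite -mulr_natr; apply: le_trans (ler_wpM2r (ler0n _ T) heps) _.
  have eT : eps * T%:R = 1 by rewrite epsE mulVf // gt_eqF.
  by rewrite mulrAC eT mul1r.
have PsiMu : forall pi, Pi pi ->
   (Eocc M pi h (fun x a => eratio (mu (x, a)) (dp x a + eps * C * mu (x, a)))
     <= (3 * L)%:E)%E.
  move=> pi Hpi; apply: le_trans (step1 pi Hpi) _.
  apply: (@le_trans _ _ (\sum_(t < T) (Eocc M (pol t) h (G t) + eps_opt%:E))%E).
    apply: lee_sum => t _; have := hopt t (ltn_ord t) => /=.
    rewrite EFinN leeBlDr // => H; apply: le_trans H.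
    by apply: ereal_sup_ubound; exists pi.
  rewrite big_split /= sumEFin sumr_const card_ord.
  apply: le_trans (leeD step4 (lexx _)) _.
  rewrite -EFinD lee_fin; lra.
split.
  by rewrite /Psi_mu /=; apply: ge_ereal_sup => _ [pi Hpi <-]; apply: PsiMu.
rewrite /Psi; apply: ge_ereal_sup => _ [pi Hpi <-].
apply: (@le_trans _ _ (C%:E * Eocc M pi h (fun x a =>
   eratio (mu (x, a)) (dp x a + eps * C * mu (x, a))))%E); last first.
  have hC : (0 <= C%:E)%E by rewrite lee_fin ltW.
  apply: le_trans; first exact: (lee_wpmul2l hC (PsiMu pi Hpi)).
  rewrite -EFinM lee_fin; nra.
rewrite /Eocc.
have hge : forall z, [set: X * A] z -> (0 <= (occ M pi h z.1 z.2)%:E *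
    eratio (mu (z.1, z.2)) (dp z.1 z.2 + eps * C * mu (z.1, z.2)))%E.
  move=> z _; apply: mule_ge0; first by rewrite lee_fin occ0.
  apply: eratio_ge0 => //; have := dp0 z.1 z.2; have := mu0 (z.1, z.2).
  move=> m0 d0; apply: addr_ge0 => //; apply: mulr_ge0 => //.
  by apply: mulr_ge0; apply: ltW.
apply: le_trans (@esumZ_le R _ [set: X * A] C _ (ltW Cpos) hge).
apply: le_esum => -[x a] _ /=.
have o0 := occ0 pi Hpi x a.
case: (eqVneq (occ M pi h x a) 0) => [->|on0].
  by rewrite !mul0e mule0.
have op : 0 < occ M pi h x a by rewrite lt0r on0 o0.
have oC := occC pi Hpi x a.
have mup : 0 < mu (x, a).
  rewrite lt0r mu0 andbT; apply/negP => /eqP m0; move: oC; rewrite m0 mulr0.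
  lra.
have Cm : 0 < C * mu (x, a) by apply: mulr_gt0.
have eCm : 0 < eps * C * mu (x, a) by rewrite -mulrA mulr_gt0.
have eo : 0 < eps * occ M pi h x a by apply: mulr_gt0.
have d0 := dp0 x a.
rewrite !eratio_pos; [|lra|lra].
rewrite -!EFinM lee_fin [X in _ <= X]mulrCA.
apply: ler_wpM2l => //.
rewrite mulrA ler_pdivrMr; last lra.
rewrite [X in _ <= X]mulrAC ler_pdivlMr; last lra.
have : occ M pi h x a * dp x a <= C * mu (x, a) * dp x a by apply: ler_wpM2r.
nra.
Qed.
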